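(* Let $n\ge1$ and let $H_1,H_2$ be irreducible subgroups of $SL(n,\mathbb{C})$. Then $Z_n(H_1)$ and $Z_n(H_2)$ are conjugate in $PSL(n,\mathbb{C})$ if and only if there exists an (abstract) group isomorphism $f:U_n(H_1)\to U_n(H_2)$ such that $f(\xi^kI_n)=\xi^kI_n$ for every integer $k$.
   Context: Let $\xi=e^{2\pi i/n}$; the center of $SL(n,\mathbb{C})$ is $\langle \xi I_n\rangle$, and $\pi_n:SL(n,\mathbb{C})\to PSL(n,\mathbb{C})$ is the quotient map. A subgroup $H\le SL(n,\mathbb{C})$ is irreducible if no nonzero proper subspace of $\mathbb{C}^n$ is $H$-invariant. $Z_n(H)$ is the centralizer of $\pi_n(H)$ in $PSL(n,\mathbb{C})$ and $U_n(H)=\pi_n^{-1}(Z_n(H))$. *)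

(* Defs.v *)
From HB Require Import structures.
From mathcomp Require Import all_boot all_order all_algebra.
Set Implicit Arguments. Unset Strict Implicit. Unset Printing Implicit Defensive.
Import Order.TTheory GRing.Theory Num.Theory.
Local Open Scope ring_scope.

(* The complex field is modelled by an arbitrary numClosedFieldType C
   (algebraically closed, characteristic 0), and xi is a given primitive
   n-th root of unity (playing the role of e^{2 pi i/n}). *)

Section Defs.
Variables (C : numClosedFieldType) (n : nat) (xi : C).

Definition inSL (A : 'M[C]_n) : Prop := \det A = 1.

Definition is_subgroup_SL (H : 'M[C]_n -> Prop) : Prop :=
  [/\ forall h, H h -> inSL h,
      H 1%:M,
      forall a b, H a -> H b -> H (a *m b)
    & forall a, H a -> H (invmx a)].

(* A subspace W is encoded as the column space of U^T, i.e. the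
   row space of U (U : 'M_n); h W <= W  iff  (U *m h^T <= U)%MS. *)
Definition irreducible_SL (H : 'M[C]_n -> Prop) : Prop :=
  forall U : 'M[C]_n,
    (forall h, H h -> (U *m h^T <= U)%MS) ->
    \rank U = 0%N \/ \rank U = n.

(* the quotient map pi_n : SL -> PSL; x and y have the same image in PSL *)
Definition pi_eq (x y : 'M[C]_n) : Prop :=
  exists k : nat, y = (xi ^+ k) *: x.

(* U_n(H) = pi_n^{-1}(Z_n(H)): g in SL with pi(g) commuting with all pi(h),
   i.e. g h = c h g for some central element c = xi^k I. *)
Definition U_n (H : 'M[C]_n -> Prop) (g : 'M[C]_n) : Prop :=
  inSL g /\ forall h, H h -> pi_eq (h *m g) (g *m h).

(* Z_n(H), represented by its (saturated) set of representatives in SL: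
   an element pi(x) (x in SL) lies in Z_n(H) iff x lies in U_n(H). *)
Definition Z_n (H : 'M[C]_n -> Prop) (x : 'M[C]_n) : Prop := U_n H x.

Definition Z_conj_PSL (H1 H2 : 'M[C]_n -> Prop) : Prop :=
  exists g, inSL g /\
    forall x, inSL x -> (Z_n H1 x <-> Z_n H2 (g *m x *m invmx g)).

Definition group_iso_U (H1 H2 : 'M[C]_n -> Prop) (f : 'M[C]_n -> 'M[C]_n) : Prop :=
  [/\ forall x, U_n H1 x -> U_n H2 (f x),
      forall x y, U_n H1 x -> U_n H1 y -> f x = f y -> x = y,
      forall y, U_n H2 y -> exists2 x, U_n H1 x & f x = y
    & forall x y, U_n H1 x -> U_n H1 y -> f (x *m y) = f x *m f y].

End Defs.

(* Main.v *)
Require Import Defs.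
From HB Require Import structures.
From mathcomp Require Import all_boot all_order all_algebra.
From mathcomp Require Import all_field all_fingroup all_solvable.
From mathcomp Require Import mxrepresentation character.
From mathcomp Require Import zify.
From Stdlib Require Import Classical.
Import GRing.Theory Num.Theory.
Local Open Scope ring_scope.

Module Helpers.
Set Implicit Arguments. Unset Strict Implicit. Unset Printing Implicit Defensive.
Import Order.TTheory.

Section Tr.
Variable F : fieldType.

Lemma tr_lin_mx a b (f : 'M[F]_(a,b) -> 'M[F]_(a,b)) :
  \tr (lin_mx f) = \sum_(i < a) \sum_(j < b) f (delta_mx i j) i j.
Proof.
rewrite /mxtrace /lin_mx.
rewrite (reindex (uncurry (@mxvec_index a b))) /=; last first.
  by case: (curry_mxvec_bij a b) => g gK Kg; exists g => x _; [apply: gK|apply: Kg].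
rewrite pair_bigA /=; apply: eq_bigr => [[i j]] _ /=.
by rewrite mxE /= vec_mx_delta mxvecE.
Qed.

Lemma mxE_delta_mul a b (A : 'M[F]_a) (B : 'M[F]_b) i j :
  (A *m delta_mx i j *m B) i j = A i i * B j j.
Proof.
rewrite !mxE (bigD1 j) //= big1 ?addr0; last first.
  move=> k /negPf nk; rewrite !mxE big1 ?mul0r // => l _.
  by rewrite !mxE nk andbF mulr0.
rewrite !mxE (bigD1 i) //= big1 ?addr0; last first.
  by move=> l /negPf nl; rewrite !mxE nl mulr0.
by rewrite !mxE !eqxx mulr1.
Qed.

Lemma tr_lin_mx_sum (I : finType) (P : pred I) a b (A : I -> 'M[F]_a) (B : I -> 'M[F]_b) :
  \tr (lin_mx (fun X : 'M[F]_(a,b) => \sum_(k | P k) A k *m X *m B k)) =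
  \sum_(k | P k) \tr (A k) * \tr (B k).
Proof.
rewrite tr_lin_mx.
transitivity (\sum_(i < a) \sum_(j < b) \sum_(k | P k) A k i i * B k j j).
  apply: eq_bigr => i _; apply: eq_bigr => j _; rewrite summxE.
  by apply: eq_bigr => k _; rewrite mxE_delta_mul.
under eq_bigr => i _ do rewrite exchange_big.
rewrite exchange_big /=; apply: eq_bigr => k _.
rewrite /mxtrace mulr_suml; apply: eq_bigr => i _.
by rewrite mulr_sumr.
Qed.

Lemma idem_tr k (L : 'M[F]_k) : L *m L = L -> \tr L = (\rank L)%:R.
Proof.
move=> LL.
have [C' C'C] := row_fullP (col_base_full L).
have [R' RR'] := row_freeP (row_base_free L).
have e: row_base L *m col_base L = 1%:M.
  set C := col_base L in C'C *; set R := row_base L in RR' *.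
  have bL : C *m R = L by exact: mulmx_base.
  transitivity ((C' *m C) *m (R *m C) *m (R *m R')).
    by rewrite C'C RR' mul1mx mulmx1.
  transitivity (C' *m (C *m R) *m (C *m R) *m R'); first by rewrite !mulmxA.
  rewrite bL -(mulmxA C' L L) LL.
  have -> : C' *m L *m R' = C' *m (C *m R) *m R' by rewrite bL.
  by rewrite (mulmxA C' C R) C'C mul1mx RR'.
by rewrite -{1}(mulmx_base L) mxtrace_mulC e mxtrace1.
Qed.

End Tr.


Section Avg.
Variables (F : numFieldType) (gT : finGroupType) (G : {group gT}).
Local Notation reprG := (mx_representation F G).

Definition avg a b (al : reprG a) (be : reprG b) (X : 'M[F]_(a,b)) :=
  \sum_(x in G) al (x^-1)%g *m X *m be x.

Lemma avg_is_linear a b (al : reprG a) (be : reprG b) : linear (avg al be).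
Proof.
move=> c X Y; rewrite /avg scaler_sumr -big_split /=; apply: eq_bigr => x _.
by rewrite mulmxDr mulmxDl -scalemxAr -scalemxAl.
Qed.

HB.instance Definition _ a b (al : reprG a) (be : reprG b) :=
  GRing.isSemilinear.Build _ _ _ _ (avg al be)
    (GRing.semilinear_linear (@avg_is_linear a b al be)).

Lemma avg_hom a b (al : reprG a) (be : reprG b) X y : y \in G ->
  al y *m avg al be X = avg al be X *m be y.
Proof.
move=> Gy; rewrite /avg mulmx_sumr mulmx_suml.
rewrite [in RHS](reindex_inj (mulIg (y^-1)%g)) /=.
apply: eq_big => [x|x Gx]; first by rewrite groupMr ?groupV.
rewrite !mulmxA -repr_mxM ?groupV //.
rewrite -!mulmxA -repr_mxM ?groupM ?groupV //.
by rewrite invMg invgK mulgKV.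
Qed.

Lemma avg_fix a b (al : reprG a) (be : reprG b) X :
  (forall y, y \in G -> al y *m X = X *m be y) ->
  avg al be X = #|G|%:R *: X.
Proof.
move=> hX; rewrite /avg scaler_nat -sumr_const.
apply: eq_bigr => x Gx; rewrite hX ?groupV // -mulmxA -repr_mxM ?groupV //.
by rewrite mulVg repr_mx1 mulmx1.
Qed.

Lemma tr_lin_avg a b (al : reprG a) (be : reprG b) :
  \tr (lin_mx (avg al be)) = \sum_(x in G) \tr (al (x^-1)%g) * \tr (be x).
Proof. exact: tr_lin_mx_sum. Qed.

Lemma row_lin a b c d (f : 'M[F]_(a,b) -> 'M[F]_(c,d)) i :
  row i (lin_mx f) = mxvec (f (vec_mx (delta_mx 0 i))).
Proof. by apply/rowP => j; rewrite !mxE. Qed.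

Lemma avg_exists a b b' (al : reprG a) (be : reprG b) (ga : reprG b')
   (J : 'M[F]_(a, b')) : J != 0 ->
  (forall y, y \in G -> al y *m J = J *m ga y) ->
  {in G, forall x, \tr (be x) = \tr (ga x)} ->
  exists2 Z : 'M[F]_(a, b), Z != 0 & forall y, y \in G -> al y *m Z = Z *m be y.
Proof.
move=> nzJ homJ trE.
have nG : (#|G|%:R : F) != 0 by rewrite pnatr_eq0 -lt0n cardG_gt0.
pose L := (#|G|%:R^-1) *: lin_mx (avg al ga).
have LL : L *m L = L.
  apply/row_matrixP => i; rewrite row_mul !rowE /L -!scalemxAr !mul_rV_lin.
  rewrite linearZ /= mxvecK linearZ /= avg_fix; last by move=> y Gy; rewrite avg_hom.
  by rewrite scalerA mulVf // scale1r.
have nzL : L != 0.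
  apply/eqP => L0.
  have : mxvec J *m L = 0 by rewrite L0 mulmx0.
  rewrite /L -scalemxAr mul_vec_lin /= avg_fix // linearZ /= scalerA mulVf // scale1r.
  by move/eqP; rewrite mxvec_eq0 (negPf nzJ).
have trL : \tr L != 0.
  rewrite idem_tr // pnatr_eq0 mxrank_eq0 //.
have : \tr (lin_mx (avg al be)) != 0.
  move: trL; rewrite /L mxtraceZ mulf_eq0 negb_or => /andP[_].
  rewrite !tr_lin_avg; congr (_ != 0); apply: eq_bigr => x Gx; by rewrite trE.
move=> ntr.
have nL : lin_mx (avg al be) != 0.
  by apply: contraNneq ntr => ->; rewrite mxtrace0.
have [i nzi]: exists i, row i (lin_mx (avg al be)) != 0.
  apply/existsP; apply: contraR nL => /existsPn hi.
  apply/eqP/row_matrixP => i; rewrite row0; apply/eqP; exact: negbNE (hi i).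
exists (avg al be (vec_mx (delta_mx 0 i))); last by move=> y Gy; exact: avg_hom.
by move: nzi; rewrite row_lin mxvec_eq0.
Qed.

End Avg.


Section Core.
Variables (F : numFieldType) (gT : finGroupType) (G : {group gT}).
Local Notation reprG := (mx_representation F G).

Lemma F'G : ([pchar F]^'.-group G)%g.
Proof.
apply: sub_pgroup (pgroup_pi G) => p _.
by rewrite inE /= pchar_num.
Qed.

Lemma core n1 n2 (r1 : reprG n1) (r2 : reprG n2) :
  {in G, forall x, \tr (r1 x) = \tr (r2 x)} -> mx_rsim r1 r2.
Proof.
elim: {n1}_.+1 {-2}n1 (ltnSn n1) n2 r1 r2 => // m IH n1 lt_n1 n2 r1 r2 trE.
have dimE : n1 = n2.
  apply/eqP; rewrite -(eqr_nat F); apply/eqP.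
  by rewrite -!mxtrace1 -(repr_mx1 r1) -(repr_mx1 r2) trE.
subst n2.
case: (posnP n1) => [n0 | n_gt0].
  subst n1; apply: (@MxReprSim _ _ _ _ r1 _ r2 1%:M);
    [by [] | by rewrite row_free_unit unitmx1 | move=> x Gx].
  by apply/matrixP => -[].
have mod1 := mxmodule1 r1.
have nz1 : (1%:M : 'M[F]_n1) != 0 by rewrite -mxrank_eq0 mxrank1 -lt0n.
have [M simM _] : exists2 M, mxsimple r1 M & (M <= 1%:M)%MS.
  apply: NNPP; apply/classicP; exact: mxsimple_exists mod1 nz1.
have modM := mxsimple_module simM.
have nzM : M != 0 by case: simM.
pose al := submod_repr modM.
have [Z nzZ homZ] : exists2 Z : 'M[F]_(\rank M, n1), Z != 0 &
    forall y, y \in G -> al y *m Z = Z *m r2 y.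
  apply: (@avg_exists F gT G _ _ _ al r2 r1 (val_submod 1%:M)).
  - by rewrite (eqmx_eq0 (val_submod1 M)).
  - move=> y Gy; rewrite -val_submodE -[al y]mul1mx.
    by rewrite (val_submodJ modM).
  - by move=> x Gx; rewrite trE.
have freeZ : row_free Z.
  rewrite -kermx_eq0; apply/negP => nzK.
  have irr : mx_irreducible al by apply/submod_mx_irr.
  have kmod : mxmodule al (kermx Z).
    apply/mxmoduleP => y Gy; apply/sub_kermxP.
    by rewrite -mulmxA homZ // mulmxA mulmx_ker mul0mx.
  case: irr => _ _ irrS.
  have := irrS _ kmod (submx1 _) (introT negP nzK).
  by move/sub_kermxP; rewrite mul1mx => Z0; rewrite Z0 eqxx in nzZ.
pose M2 := (<<Z>>%MS : 'M[F]_n1).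
have ZM2 : (Z <= M2)%MS by rewrite genmxE.
have modM2 : mxmodule r2 M2.
  apply/mxmoduleP => y Gy; rewrite /M2 (eqmxMr _ (genmxE Z)) genmxE -homZ //.
  exact: submxMl.
have rsimM2 : mx_rsim al (submod_repr modM2).
  apply: (@MxReprSim _ _ _ _ al _ (submod_repr modM2) (in_submod M2 Z)).
  - have e1 : \rank M2 = \rank Z by rewrite /M2 genmxE.
    by rewrite e1; move: freeZ; rewrite /row_free => /eqP ->.
  - by rewrite /row_free (mxrank_in_submod ZM2); exact: freeZ.
  - move=> y Gy; transitivity (in_submod M2 (Z *m r2 y)).
      by rewrite -homZ // (in_submodE M2 (al y *m Z)) (in_submodE M2 Z) mulmxA.
    exact: (in_submodJ modM2 y ZM2).
have [W1 modW1 defW1 dxW1] := mx_Maschke_pchar r1 F'G modM (submx1 M).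
have [W2 modW2 defW2 dxW2] := mx_Maschke_pchar r2 F'G modM2 (submx1 M2).
have mod2 := mxmodule1 r2.
have trW : {in G, forall x, \tr (submod_repr modW1 x) = \tr (submod_repr modW2 x)}.
  move=> x Gx.
  have e1 := mxtrace_dadd_mod modM modW1 mod1 defW1 dxW1 Gx.
  have e2 := mxtrace_dadd_mod modM2 modW2 mod2 defW2 dxW2 Gx.
  rewrite (mxtrace_submod1 mod1 (eqmx_refl _) Gx) in e1.
  rewrite (mxtrace_submod1 mod2 (eqmx_refl _) Gx) in e2.
  rewrite -(mxtrace_rsim rsimM2 Gx) -trE // -e1 in e2.
  by apply: (addrI (\tr (al x))); rewrite e2.
have ltW : (\rank W1 < m)%N.
  have e : (\rank M + \rank W1)%N = n1.
    by rewrite -(mxdirectP dxW1) /= (eqmx_rank (introT eqmxP defW1)) mxrank1.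
  have rM : (0 < \rank M)%N by rewrite lt0n mxrank_eq0.
  move: (\rank M) (\rank W1) rM e lt_n1 => a b; clear; lia.
have rW := IH _ ltW _ (submod_repr modW1) (submod_repr modW2) trW.
have s1 := mx_rsim_dadd (rU := Representation al) (rV := Representation (submod_repr modW1))
            mod1 defW1 dxW1 (mx_rsim_refl _) (mx_rsim_refl _).
have s2 := mx_rsim_dadd (rU := Representation al) (rV := Representation (submod_repr modW1))
            mod2 defW2 dxW2 (mx_rsim_sym rsimM2) (mx_rsim_sym rW).
apply: mx_rsim_trans (mx_rsim_sym (rsim_submod1 mod1 (eqmx_refl _))) _.
apply: mx_rsim_trans s1 _.
apply: mx_rsim_trans (mx_rsim_sym s2) _.
exact: rsim_submod1.
Qed.

End Core.


Section App1.
Variables (C : numClosedFieldType) (n : nat) (xi : C).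
Hypotheses (hn : (1 <= n)%N) (hxi : n.-primitive_root xi).
Variable H : 'M[C]_n -> Prop.
Hypotheses (hH : is_subgroup_SL H) (irr : irreducible_SL H).

Local Notation U := (U_n xi H).

Lemma xin : xi ^+ n = 1. Proof. exact: prim_expr_order. Qed.

Lemma inSL_unit (g : 'M[C]_n) : inSL g -> g \in unitmx.
Proof. by rewrite unitmxE /inSL => ->; rewrite unitr1. Qed.

Lemma U_mul x y : U x -> U y -> U (x *m y).
Proof.
move=> [dx hx] [dy hy]; split; first by rewrite /inSL det_mulmx dx dy mulr1.
move=> h Hh; case: (hx h Hh) => k1 e1; case: (hy h Hh) => k2 e2.
exists (k1 + k2)%N.
rewrite -mulmxA e2 -scalemxAr (mulmxA x h y) e1 -scalemxAl scalerA exprD mulrC.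
by rewrite !mulmxA.
Qed.

Lemma U_scal k : U (xi ^+ k *: 1%:M).
Proof.
split; first by rewrite /inSL scalemx1 det_scalar -exprM mulnC exprM xin expr1n.
move=> h Hh; exists 0%N; rewrite expr0 scale1r scalemx1.
by rewrite scalar_mxC.
Qed.

Lemma U_scalM k x : U x -> U (xi ^+ k *: x).
Proof.
move=> Ux; rewrite -[x]mul1mx scalemxAl; exact: U_mul (U_scal k) Ux.
Qed.

Lemma U_inv x : U x -> U (invmx x).
Proof.
move=> [dx hx]; have ux := inSL_unit dx.
split; first by rewrite /inSL det_inv dx invr1.
move=> h Hh; case: (hx h Hh) => k e.
exists (k * n.-1)%N.
have e' : h *m invmx x = xi ^+ k *: (invmx x *m h).
  transitivity (invmx x *m (x *m h) *m invmx x).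
    by rewrite mulmxA mulVmx // mul1mx.
  by rewrite e -scalemxAr -scalemxAl -!mulmxA mulmxV // mulmx1.
rewrite e' scalerA -exprD -mulnSr prednK // mulnC exprM xin expr1n scale1r.
done.
Qed.

Lemma U_one : U 1%:M.
Proof. by rewrite -[1%:M]scale1r -(expr0 xi); exact: U_scal. Qed.

Lemma schur x : (forall h, H h -> x *m h = h *m x) -> exists l, x = l%:M.
Proof.
move=> cx.
have [l rt] : exists l, root (char_poly x) l.
  by apply/closed_rootP; rewrite size_char_poly; case: n hn.
have ev : eigenvalue x l by rewrite eigenvalue_root_char.
set A := x - l%:M.
have cA h : H h -> A *m h = h *m A.
  by move=> Hh; rewrite /A mulmxBl mulmxBr cx // scalar_mxC.
have inv : forall h, H h -> (kermx A^T *m h^T <= kermx A^T)%MS.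
  move=> h Hh; apply/sub_kermxP.
  by rewrite -mulmxA -trmx_mul cA // trmx_mul mulmxA mulmx_ker mul0mx.
have rk := mxrank_ker A^T; rewrite mxrank_tr in rk.
have kA : (0 < \rank (kermx A))%N.
  by rewrite lt0n mxrank_eq0; exact: ev.
rewrite mxrank_ker in kA.
exists l; apply/eqP; rewrite -subr_eq0 -/A -mxrank_eq0.
have rA := rank_leq_row A.
case: (irr inv) => r; rewrite r in rk; lia.
Qed.

Lemma trace0 x : U x -> (forall k, x <> xi ^+ k *: 1%:M) -> \tr x = 0.
Proof.
move=> [dx hx] nsc; apply: NNPP => ntr.
have cx : forall h, H h -> x *m h = h *m x.
  move=> h Hh; case: (hx h Hh) => k e.
  have uh : h \in unitmx by apply: inSL_unit; case: hH => + _ _ _; apply.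
  have : \tr x = xi ^+ k * \tr x.
    by rewrite -{1}(mulmxK uh x) e -scalemxAl mxtraceZ mxtrace_mulC mulKmx.
  move/eqP; rewrite -{1}[\tr x]mul1r -subr_eq0 -mulrBl mulf_eq0.
  case/orP => [|/eqP t0]; last by case: ntr.
  by rewrite subr_eq0 => /eqP ek; rewrite e -ek scale1r.
have [l xl] := schur cx.
have : l ^+ n = 1 by rewrite -det_scalar -xl.
move/(prim_rootP hxi) => [i li].
by apply: (nsc i); rewrite xl li scalemx1.
Qed.

End App1.


Section App2.
Variables (C : numClosedFieldType) (n : nat) (xi : C).
Hypotheses (hn : (1 <= n)%N) (hxi : n.-primitive_root xi).
Variable H : 'M[C]_n -> Prop.
Hypotheses (hH : is_subgroup_SL H) (irr : irreducible_SL H).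

Local Notation U := (U_n xi H).

Definition prop (a b : 'M[C]_n) := exists k : nat, a = xi ^+ k *: b.

Lemma prop_sym a b : prop a b -> prop b a.
Proof.
case=> k ->; exists (k * n.-1)%N; rewrite scalerA -exprD -mulnSr prednK //.
by rewrite mulnC exprM (xin hxi) expr1n scale1r.
Qed.

Lemma trace_cross a b : U a -> U b -> ~ prop b a -> \tr (invmx a *m b) = 0.
Proof.
move=> Ua Ub np; apply: (trace0 hn hxi hH irr); first exact: U_mul (U_inv hn hxi Ua) Ub.
move=> k e; apply: np; exists k.
have ua : a \in unitmx by apply: inSL_unit; case: Ua.
by rewrite -(mulKVmx ua b) e -scalemxAr mulmx1.
Qed.

Definition good (t : seq 'M[C]_n) :=
  (forall x, x \in t -> U x) /\
  (forall i j, (i < size t)%N -> (j < size t)%N -> i <> j ->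
     ~ prop (nth 0 t i) (nth 0 t j)).

Definition complete (t : seq 'M[C]_n) := forall u, U u -> exists2 x, x \in t & prop u x.

Lemma good_free t : good t -> free t.
Proof.
move=> [tU tp]; apply/(@freeP _ _ _ (in_tuple t)) => c sum0 j.
have Uj : U (nth 0 t j) by apply: tU; exact: mem_nth.
have uj : nth 0 t j \in unitmx by apply: inSL_unit; case: Uj.
have : \tr (invmx (nth 0 t j) *m \sum_(i < size t) c i *: (in_tuple t)`_i) = 0.
  by rewrite sum0 mulmx0 mxtrace0.
rewrite mulmx_sumr raddf_sum (bigD1 j) //= big1 ?addr0; last first.
  move=> i nij; rewrite -scalemxAr mxtraceZ trace_cross ?mulr0 //.
  - by apply: tU; exact: mem_nth.
  - apply: tp => //; move=> e; move: nij; rewrite -(inj_eq val_inj) /= e eqxx //.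
rewrite -scalemxAr mxtraceZ mulVmx // mxtrace1 => /eqP.
by rewrite mulf_eq0 pnatr_eq0 (gtn_eqF hn) orbF => /eqP.
Qed.

Lemma good_size t : good t -> (size t <= n * n)%N.
Proof.
move/good_free; rewrite /free => /eqP <-.
by apply: leq_trans (dimvS (subvf _)) _; rewrite dimvf /= dim_matrix.
Qed.

Lemma good_nil : good [::].
Proof. by split. Qed.

Lemma extend t : good t -> ~ complete t -> exists u, good (rcons t u).
Proof.
move=> [tU tp] nct.
have [u [Uu nu]] : exists u, U u /\ forall x, x \in t -> ~ prop u x.
  apply: NNPP => H0; apply: nct => u Uu; apply: NNPP => nex; apply: H0.
  by exists u; split => // x xt pux; apply: nex; exists x.
exists u; split.
  by move=> x; rewrite mem_rcons inE => /orP[/eqP ->|]; [|apply: tU].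
move=> i j; rewrite size_rcons !ltnS !nth_rcons => hi hj nij.
have [it|ni] := boolP (i < size t)%N; have [jt|nj] := boolP (j < size t)%N.
- exact: tp.
- have -> : j == size t by rewrite eqn_leq hj leqNgt nj.
  by move/prop_sym; apply: nu; exact: mem_nth.
- have -> : i == size t by rewrite eqn_leq hi leqNgt ni.
  by apply: nu; exact: mem_nth.
- by case: nij; apply/eqP; rewrite eqn_leq; lia.
Qed.

Lemma exists_complete : exists t, good t /\ complete t.
Proof.
suff: forall d t, good t -> (n * n - size t <= d)%N -> exists t, good t /\ complete t.
  by move/(_ (n * n)%N [::] good_nil); apply; rewrite leq_subr.
elim=> [|d IH] t gt le.
  case: (classic (complete t)) => [ct|nct]; first by exists t.
  have [u gt'] := extend gt nct.
  have := good_size gt'; rewrite size_rcons; lia.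
case: (classic (complete t)) => [ct|nct]; first by exists t.
have [u gt'] := extend gt nct.
apply: (IH _ gt'); have := good_size gt'; rewrite size_rcons; lia.
Qed.

Lemma enum_U : exists s : seq 'M[C]_n, uniq s /\ forall x, U x <-> x \in s.
Proof.
have [t [[tU _] ct]] := exists_complete.
exists (undup [seq xi ^+ k *: x | x <- t, k <- iota 0 n]); split; first exact: undup_uniq.
move=> x; rewrite mem_undup; split.
  move=> Ux; have [y yt [k ->]] := ct x Ux.
  apply/allpairsP; exists (y, (k %% n)%N) => /=; split => //.
    by rewrite mem_iota add0n ltn_pmod.
  by rewrite prim_expr_mod.
by case/allpairsP => [[y k] /= [yt _ ->]]; apply: U_scalM => //; apply: tU.
Qed.

End App2.


Section FinGrp.
Variables (F : fieldType) (n : nat) (s : seq 'M[F]_n).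
Hypotheses (us : uniq s) (s1 : 1%:M \in s)
  (sM : forall x y, x \in s -> y \in s -> x *m y \in s)
  (sU : forall x, x \in s -> x \in unitmx).

Local Notation N := (size s).

Lemma i0P : (index 1%:M s < N)%N. Proof. by rewrite index_mem. Qed.
Definition i0 : 'I_N := Ordinal i0P.

Definition idx (x : 'M[F]_n) : 'I_N := insubd i0 (index x s).

Lemma idxE x : x \in s -> val (idx x) = index x s.
Proof. by move=> xs; rewrite val_insubd index_mem xs. Qed.

Lemma nth_idx x : x \in s -> nth 0 s (idx x) = x.
Proof. by move=> xs; rewrite idxE // nth_index. Qed.

Lemma idx_nth (i : 'I_N) : idx (nth 0 s i) = i.
Proof. by apply: val_inj; rewrite idxE ?mem_nth // index_uniq. Qed.

Lemma mem_s (i : 'I_N) : nth 0 s i \in s.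
Proof. exact: mem_nth. Qed.

Lemma phi_inj (i : 'I_N) : injective (fun j : 'I_N => idx (nth 0 s j *m nth 0 s i)).
Proof.
move=> j k /= e.
have := congr1 (fun k : 'I_N => nth 0 s k) e; rewrite /= !nth_idx ?sM ?mem_s //.
move/(congr1 (mulmx^~ (invmx (nth 0 s i)))); rewrite !mulmxK ?sU ?mem_s //.
by move=> e2; rewrite -(idx_nth j) -(idx_nth k) e2.
Qed.

Definition phi (i : 'I_N) : {perm 'I_N} := perm (@phi_inj i).

Lemma phiM i j : (phi i * phi j)%g = phi (idx (nth 0 s i *m nth 0 s j)).
Proof.
apply/permP => k; rewrite permM !permE /= nth_idx ?sM ?mem_s //.
by rewrite nth_idx ?sM ?mem_s // mulmxA.
Qed.

Lemma phi1 : phi i0 = 1%g.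
Proof.
apply/permP => k; rewrite permE perm1 /=.
have -> : nth 0 s i0 = 1%:M by rewrite /= nth_index.
by rewrite mulmx1 idx_nth.
Qed.

Definition Aset : {set {perm 'I_N}} := [set phi i | i : 'I_N].

Lemma Aset_group : group_set Aset.
Proof.
apply/group_setP; split.
  by rewrite -phi1; apply: imset_f.
move=> x y /imsetP[i _ ->] /imsetP[j _ ->]; rewrite phiM; exact: imset_f.
Qed.

Definition Gs := Group Aset_group.

Definition rho (p : {perm 'I_N}) : 'M[F]_n := nth 0 s (p i0).

Lemma rho_phi i : rho (phi i) = nth 0 s i.
Proof.
rewrite /rho permE /=.
have -> : nth 0 s i0 = 1%:M by rewrite /= nth_index.
by rewrite mul1mx nth_idx ?mem_s.
Qed.

Lemma rho_repr : mx_repr Gs rho.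
Proof.
split; first by rewrite /rho perm1 /= nth_index.
move=> x y /imsetP[i _ ->] /imsetP[j _ ->].
by rewrite phiM !rho_phi nth_idx ?sM ?mem_s.
Qed.

Lemma rho_in g : g \in Gs -> rho g \in s.
Proof. by move=> /imsetP[i _ ->]; rewrite rho_phi mem_s. Qed.

Lemma rho_onto x : x \in s -> exists2 g, g \in Gs & rho g = x.
Proof.
move=> xs; exists (phi (idx x)); first exact: imset_f.
by rewrite rho_phi nth_idx.
Qed.

End FinGrp.

Lemma fin_group (F : fieldType) (n : nat) (s : seq 'M[F]_n) :
  uniq s -> 1%:M \in s -> (forall x y, x \in s -> y \in s -> x *m y \in s) ->
  (forall x, x \in s -> x \in unitmx) ->
  exists (gT : finGroupType) (G : {group gT}) (r : gT -> 'M[F]_n),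
    [/\ mx_repr G r, (forall g, g \in G -> r g \in s) &
        (forall x, x \in s -> exists2 g, g \in G & r g = x)].
Proof.
move=> us s1 sM sU.
exists _, (Gs us s1 sM sU), (rho s1); split.
- exact: rho_repr.
- exact: rho_in.
- exact: rho_onto.
Qed.

End Helpers.
Import Helpers.

Lemma conj_inj (C : fieldType) n (g x y : 'M[C]_n) : g \in unitmx ->
  g *m x *m invmx g = g *m y *m invmx g -> x = y.
Proof.
move=> ug /(congr1 (mulmx^~ g)); rewrite !mulmxKV //.
by move/(congr1 (mulmx (invmx g))); rewrite !mulKmx.
Qed.

Theorem mainTheorem5 (C : numClosedFieldType) (n : nat) (xi : C)
  (hn : (1 <= n)%N) (hxi : n.-primitive_root xi)
  (H1 H2 : 'M[C]_n -> Prop)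
  (hH1 : is_subgroup_SL H1) (hH2 : is_subgroup_SL H2)
  (irr1 : irreducible_SL H1) (irr2 : irreducible_SL H2) :
  Z_conj_PSL xi H1 H2 <->
  exists f : 'M[C]_n -> 'M[C]_n,
    group_iso_U xi H1 H2 f /\
    forall k : int, f ((xi ^ k) *: 1%:M) = (xi ^ k) *: 1%:M.
Proof.
split.
  case=> g [dg hg]; have ug := inSL_unit dg.
  exists (fun x => g *m x *m invmx g); split; last first.
    move=> k; rewrite scalemx1 scalar_mxC -mulmxA mulmxV // mulmx1.
    done.
  split.
  - by move=> x Ux; apply/(hg x Ux.1).
  - by move=> x y _ _; apply: conj_inj.
  - move=> y Uy; pose x := invmx g *m y *m g.
    have ex : g *m x *m invmx g = y.
      by rewrite /x !mulmxA mulmxV // mul1mx mulmxK.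
    have dx : inSL x.
      by rewrite /inSL /x !det_mulmx det_inv dg Uy.1 invr1 !mulr1.
    exists x => //; apply/(hg x dx); rewrite ex; exact: Uy.
  - move=> x y _ _ /=.
    by rewrite !mulmxA mulmxKV.
case=> f [[fU finj fsurj fM] ffix].
have fk k : f (xi ^+ k *: 1%:M) = xi ^+ k *: 1%:M by exact: (ffix k).
have f1 : f 1%:M = 1%:M by have := fk 0%N; rewrite expr0 scale1r.
have trf : forall u, U_n xi H1 u -> \tr (f u) = \tr u.
  move=> u Uu; case: (classic (exists k : nat, u = xi ^+ k *: 1%:M)) => [[k ->]|ns].
    by rewrite fk.
  rewrite (trace0 hn hxi hH1 irr1 Uu); last by move=> k e; apply: ns; exists k.
  apply: (trace0 hn hxi hH2 irr2 (fU u Uu)) => k e; apply: ns; exists k.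
  by apply: finj => //; [exact: U_scal | rewrite e fk].
have [s [us hs]] := enum_U hn hxi hH1 irr1.
have s1 : 1%:M \in s by apply/hs; exact: U_one.
have sM : forall x y, x \in s -> y \in s -> x *m y \in s.
  by move=> x y /hs Ux /hs Uy; apply/hs; exact: U_mul.
have sU : forall x, x \in s -> x \in unitmx.
  by move=> x /hs [dx _]; exact: inSL_unit.
have [gT [G [r [rrepr rin ronto]]]] := fin_group us s1 sM sU.
pose rho := MxRepresentation rrepr.
have frepr : mx_repr G (fun g => f (r g)).
  have [r1 rM] := rrepr; split; first by rewrite r1 f1.
  move=> x y Gx Gy; rewrite rM // fM //; apply/hs; exact: rin.
pose sig := MxRepresentation frepr.
have [B _ freeB hB] : mx_rsim rho sig.
  apply: core => x Gx /=; rewrite trf //; apply/hs; exact: rin.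
have uB : B \in unitmx by rewrite -row_free_unit.
have hBu : forall u, U_n xi H1 u -> u *m B = B *m f u.
  move=> u /hs us'; have [g Gg <-] := ronto u us'; exact: hB.
pose c := n.-root (\det B).
have cn : c ^+ n = \det B by rewrite /c rootCK.
have dB : \det B != 0 by rewrite -unitfE -unitmxE.
pose gg := c *: invmx B.
have dg : inSL gg by rewrite /inSL /gg detZ det_inv cn divff.
have ug := inSL_unit dg.
have conj : forall u, U_n xi H1 u -> gg *m u *m invmx gg = f u.
  move=> u Uu.
  have e : gg *m u = f u *m gg.
    rewrite /gg -scalemxAl -scalemxAr; congr (_ *: _).
    rewrite -[invmx B *m u]mulmx1 -(mulmxV uB) !mulmxA.
    by rewrite -(mulmxA _ u B) hBu // !mulmxA mulVmx // mul1mx.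
  by rewrite e mulmxK.
exists gg; split => // x dx; split.
  by move=> Ux; rewrite conj //; exact: fU.
move=> U2x; have [x' Ux' fx'] := fsurj _ U2x.
rewrite -(conj _ Ux') in fx'.
by rewrite -(@conj_inj _ _ _ _ _ ug fx').
Qed.
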